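(* Let $G$ be a totally disconnected locally compact group. Then $C_c^\infty(G)=\mathcal P(G)$.
   Context: $C_c^\infty(G)$ (the smooth functions) is the linear span of the characteristic functions $\chi_{xH}$ with $x\in G$ and $H$ a compact open subgroup of $G$; equivalently the union over compact open subgroups $H$ of the compactly supported continuous functions constant on the cosets $xH$. $\mathcal P(G)$ is the set of $f\in C_c(G)$ such that for some compact open subgroup $H$ of $G$ there exist finitely many $f_i\in C_c(G)$ and $\phi_i\in C(H)$ with $f(xh)=\sum_i f_i(x)\phi_i(h)$ for all $x\in G,h\in H$. *)

(* Defs.v *)
From HB Require Import structures.
From mathcomp Require Import all_boot all_order all_algebra.
From mathcomp Require Import all_classical all_reals all_analysis.
From mathcomp Require Import complex.

Set Implicit Arguments.
Unset Strict Implicit.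
Unset Printing Implicit Defensive.

Import Order.TTheory GRing.Theory Num.Theory.
Import numFieldNormedType.Exports.
Local Open Scope classical_set_scope.
Local Open Scope ring_scope.

Definition is_topological_group (G : topologicalType)
  (mul : G -> G -> G) (inv : G -> G) (e : G) : Prop :=
  [/\ (forall x y z, mul x (mul y z) = mul (mul x y) z),
      (forall x, mul e x = x /\ mul x e = x),
      (forall x, mul (inv x) x = e /\ mul x (inv x) = e),
      continuous (fun p : G * G => mul p.1 p.2) &
      continuous inv].

Definition is_tdlc_group (G : topologicalType)
  (mul : G -> G -> G) (inv : G -> G) (e : G) : Prop :=
  [/\ is_topological_group mul inv e,
      hausdorff_space G,
      (forall x : G, exists2 K : set G, compact K & nbhs x K) &
      totally_disconnected [set: G]].

Definition is_subgroup (G : Type) (mul : G -> G -> G) (inv : G -> G) (e : G)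
  (H : set G) : Prop :=
  [/\ H e, (forall x y, H x -> H y -> H (mul x y)) & (forall x, H x -> H (inv x))].

Definition compact_open_subgroup (G : topologicalType)
  (mul : G -> G -> G) (inv : G -> G) (e : G) (H : set G) : Prop :=
  [/\ is_subgroup mul inv e H, open H & compact H].

Section Spaces.
Variables (R : realType) (G : topologicalType).
Variables (mul : G -> G -> G) (inv : G -> G) (e : G).

(* The topology of C = R[i] is the standard one, i.e. that of R x R via
   z |-> (Re z, Im z). *)
Definition C_to_R2 (z : R[i]) : R * R := let: Complex a b := z in (a, b).
Definition ccontinuous (f : G -> R[i]) : Prop := continuous (C_to_R2 \o f).
Definition ccontinuous_within (H : set G) (f : G -> R[i]) : Prop :=
  {within H, continuous (C_to_R2 \o f)}.

Definition fsupport (f : G -> R[i]) : set G := closure [set x | f x != 0].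

Definition Cc : set (G -> R[i]) :=
  [set f | ccontinuous f /\ compact (fsupport f)].

Definition coset_indicator (x : G) (H : set G) : G -> R[i] :=
  fun y => if `[< exists2 h, H h & y = mul x h >] then 1 else 0.

Definition Cc_infty : set (G -> R[i]) :=
  [set f | exists (n : nat) (c : 'I_n -> R[i]) (xs : 'I_n -> G)
             (Hs : 'I_n -> set G),
      (forall i, compact_open_subgroup mul inv e (Hs i)) /\
      f = (fun y => \sum_(i < n) c i * coset_indicator (xs i) (Hs i) y)].

Definition PG : set (G -> R[i]) :=
  [set f | Cc f /\
     exists (H : set G), compact_open_subgroup mul inv e H /\
     exists (n : nat) (fs : 'I_n -> G -> R[i]) (phis : 'I_n -> G -> R[i]),
       (forall i, Cc (fs i)) /\
       (forall i, ccontinuous_within H (phis i)) /\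
       (forall x h, H h -> f (mul x h) = \sum_(i < n) fs i x * phis i h)].

End Spaces.

(* Main.v *)
Require Import Defs.
From HB Require Import structures.
From mathcomp Require Import all_boot all_order all_algebra.
From mathcomp Require Import all_classical all_reals all_analysis.
From mathcomp Require Import complex.
Set Implicit Arguments.
Unset Strict Implicit.
Unset Printing Implicit Defensive.
Import Order.TTheory GRing.Theory Num.Theory.
Import numFieldNormedType.Exports.
Local Open Scope classical_set_scope.
Local Open Scope ring_scope.
From mathcomp Require Import ring lra.

Section Topo.
Context {T : topologicalType}.

Lemma FI (C O : set T) (D : set (set T)) :
  compact C -> open O -> (exists A0, D A0) ->
  (forall A B, D A -> D B -> exists2 E, D E & E `<=` A `&` B) ->
  (forall A, D A -> closed A /\ A `<=` C) ->
  (forall x, (forall A, D A -> A x) -> O x) ->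
  exists2 A, D A & A `<=` O.
Proof.
move=> cC oO [A0 DA0] DI Dcl DO.
case: (pselect (exists2 A, D A & A `<=` O)) => // nE; exfalso.
have ne : forall A, D A -> (A `&` ~` O) !=set0.
  move=> A DA; apply/set0P/negP => /eqP h; apply: nE; exists A => // x Ax.
  apply: contrapT => nOx; have : (A `&` ~` O) x by [].
  by rewrite h.
pose F := filter_from D (fun A => A `&` ~` O).
have FF : Filter F.
  apply: filter_from_filter; first by exists A0.
  move=> A B DA DB; have [E DE EAB] := DI A B DA DB; exists E => // x [Ex nOx].
  by have [] := EAB x Ex; split; split.
have PF : ProperFilter F by apply: filter_from_proper.
have FC : F C by exists A0 => // x [/(Dcl _ DA0).2].
have [y [Cy cly]] := cC F PF FC.
have Ay : forall A, D A -> (A `&` ~` O) y.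
  move=> A DA.
  have clA : closed (A `&` ~` O).
    by apply: closedI; [exact: (Dcl _ DA).1 | exact: open_closedC].
  rewrite closure_id in clA; rewrite clA => B nB.
  by apply: cly => //; exists A.
exact: (Ay A0 DA0).2 (DO y (fun A DA => (Ay A DA).1)).
Qed.

Lemma sep_pt (hT : hausdorff_space T) (B : set T) a : compact B -> ~ B a ->
  exists U V, [/\ open U, open V, U a, B `<=` V & U `&` V = set0].
Proof.
move=> cB nBa.
pose D := [set E | exists U, [/\ open U, U a & E = B `&` closure U]].
have [E [U [oU Ua ->]] EO] : exists2 E, D E & E `<=` set0.
  apply: (@FI B set0 D cB open0); first by exists B; exists setT; split => //; [exact: openT | by rewrite closureT setIT].
- move=> _ _ [U1 [oU1 U1a ->]] [U2 [oU2 U2a ->]].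
  exists (B `&` closure (U1 `&` U2)); first by exists (U1 `&` U2); split => //; exact: openI.
  by move=> x [Bx /closureI [c1 c2]].
- move=> _ [U [oU Ua ->]]; split; last by move=> x [].
  by apply: closedI; [exact: compact_closed | exact: closed_closure].
- move=> x Hx.
  have Bx : B x by have [] := Hx (B `&` closure setT) (ex_intro _ setT (And3 openT I erefl)).
  have xa : a != x by apply/eqP => ax; apply: nBa; rewrite ax.
  move: hT; rewrite open_hausdorff => /(_ _ _ xa) [[U V] /= [/set_mem Ua /set_mem Vx] [oU oV /eqP UV]].
  have [_ clU] := Hx (B `&` closure U) (ex_intro _ U (And3 oU Ua erefl)).
  have [z [Uz Vz]] := clU V (open_nbhs_nbhs (conj oV Vx)).
  by have : (U `&` V) z by []; rewrite UV.
exists U, (~` closure U); split => //.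
- exact/closed_openC/closed_closure.
- by move=> b Bb clb; apply: (EO b).
- by rewrite -subsets_disjoint; apply: subset_closure.
Qed.

Lemma sep_cpt (hT : hausdorff_space T) (A B : set T) : compact A -> compact B ->
  A `&` B = set0 ->
  exists U V, [/\ open U, open V, A `<=` U, B `<=` V & U `&` V = set0].
Proof.
move=> cA cB AB.
pose D := [set E | exists V, [/\ open V, B `<=` V & E = A `&` closure V]].
have [E [V [oV BV ->]] EO] : exists2 E, D E & E `<=` set0.
  apply: (@FI A set0 D cA open0); first by exists A; exists setT; split => //; [exact: openT | by rewrite closureT setIT].
- move=> _ _ [U1 [oU1 U1a ->]] [U2 [oU2 U2a ->]].
  exists (A `&` closure (U1 `&` U2)); first by exists (U1 `&` U2); split => //; [exact: openI| by move=> z Bz; split; [apply: U1a|apply: U2a]].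
  by move=> x [Bx /closureI [c1 c2]].
- move=> _ [U [oU Ua ->]]; split; last by move=> x [].
  by apply: closedI; [exact: compact_closed | exact: closed_closure].
- move=> x Hx.
  have Ax : A x by have [] := Hx (A `&` closure setT) (ex_intro _ setT (And3 openT (fun _ _ => I) erefl)).
  have nBx : ~ B x by move=> Bx; have : (A `&` B) x by []; rewrite AB.
  have [U [V [oU oV Ux BV UV]]] := sep_pt hT cB nBx.
  have [_ clV] := Hx (A `&` closure V) (ex_intro _ V (And3 oV BV erefl)).
  have [z [Vz Uz]] := clV U (open_nbhs_nbhs (conj oU Ux)).
  by have : (U `&` V) z by []; rewrite UV.
exists (~` closure V), V; split => //.
- exact/closed_openC/closed_closure.
- by move=> b Bb clb; apply: (EO b).
- by rewrite setIC -subsets_disjoint; apply: subset_closure.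
Qed.


Lemma qc (hT : hausdorff_space T) (tdT : totally_disconnected [set: T])
  (C O : set T) x :
  compact C -> C x -> open O -> O x ->
  exists E, [/\ E x, E `<=` C, closed E, closed (C `\` E) & E `<=` O].
Proof.
move=> cC Cx oO Ox.
have clC := compact_closed hT cC.
pose D := [set E | [/\ E x, E `<=` C, closed E & closed (C `\` E)]].
pose Q := [set y | forall E, D E -> E y].
have DC : D C by split => //; rewrite setDv; exact: closed0.
have DI : forall A B, D A -> D B -> D (A `&` B).
  move=> A B [Ax AC clA clCA] [Bx BC clB clCB]; split.
  - by split.
  - by move=> y [/AC].
  - exact: closedI.
  - by rewrite setDIr; exact: closedU.
have FIgen : forall O', open O' -> Q `<=` O' -> exists2 E, D E & E `<=` O'.
  move=> O' oO' QO'; apply: (FI cC oO') => //; first by exists C.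
    by move=> A B DA DB; exists (A `&` B) => //; exact: DI.
  by move=> A [_ AC clA _].
have Qx : Q x by move=> E [].
have clQ : closed Q.
  move=> y cly E DE; have clE : closed E by case: DE.
  rewrite closure_id in clE; rewrite clE => B nB.
  have [z [Qz Bz]] := cly B nB; exists z; split => //; exact: Qz E DE.
have QC : Q `<=` C by move=> y Qy; exact: Qy C DC.
have split_lem : forall E U1 U2, D E -> open U1 -> open U2 -> U1 `&` U2 = set0 ->
    E `<=` U1 `|` U2 -> U1 x -> D (E `&` U1).
  move=> E U1 U2 [Ex EC clE clCE] oU1 oU2 U12 EU U1x.
  have U12y : forall y, U1 y -> U2 y -> False.
    by move=> y a b; have : (U1 `&` U2) y by []; rewrite U12.
  split => //.
  - by move=> y [/EC].
  - have -> : E `&` U1 = E `&` ~` U2.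
      apply/seteqP; split => y [Ey Uy]; split => //; first by move=> U2y; exact: U12y Uy U2y.
      by case: (EU y Ey).
    by apply: closedI => //; exact: open_closedC.
  - have -> : C `\` (E `&` U1) = (C `\` E) `|` (E `&` ~` U1).
      apply/seteqP; split => y.
        move=> [Cy nEU]; case: (pselect (E y)) => Ey; last by left.
        by right; split => // U1y; exact: nEU.
      case=> [[Cy nEy]|[Ey nU1y]]; split => //; [by case | exact: EC | by case].
    by apply: closedU => //; apply: closedI => //; exact: open_closedC.
have conQ : connected Q.
  move=> B B0 [U oU BU] [Z clZ BZ].
  have cB1 : compact B.
    by rewrite BZ; apply: (subclosed_compact _ cC); [exact: closedI | by move=> y [/QC]].
  pose B2 := Q `&` ~` U.
  have cB2 : compact B2.
    apply: (subclosed_compact _ cC); last by move=> y [/QC].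
    by apply: closedI => //; exact: open_closedC.
  have B12 : B `&` B2 = set0.
    by rewrite BU; apply/seteqP; split => y // [[_ Uy] [_ nUy]].
  have [U1 [U2 [oU1 oU2 BU1 B2U2 U12]]] := sep_cpt hT cB1 cB2 B12.
  have U12y : forall y, U1 y -> U2 y -> False.
    by move=> y a b; have : (U1 `&` U2) y by []; rewrite U12.
  have QU : Q `<=` U1 `|` U2.
    move=> y Qy; case: (pselect (U y)) => Uy.
      by left; apply: BU1; rewrite BU.
    by right; apply: B2U2.
  have [E DE EU] := FIgen _ (openU oU1 oU2) QU.
  case: (QU x Qx) => [U1x|U2x].
  + have DE' := split_lem E U1 U2 DE oU1 oU2 U12 EU U1x.
    apply/seteqP; split; first by rewrite BU => y [].
    move=> y Qy; rewrite BU; split => //; apply: contrapT => nUy.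
    have B2y : B2 y by split.
    exact: U12y (proj2 (Qy _ DE')) (B2U2 _ B2y).
  + have EU' : E `<=` U2 `|` U1 by move=> y /EU [?|?]; [right|left].
    have U21 : U2 `&` U1 = set0 by rewrite setIC.
    have DE' := split_lem E U2 U1 DE oU2 oU1 U21 EU' U2x.
    case: B0 => b Bb; exfalso.
    have Qb : Q b by move: Bb; rewrite BU => -[].
    exact: U12y (BU1 _ Bb) (proj2 (Qb _ DE')).
have Qx1 : Q `<=` [set x].
  rewrite -(tdT x I); apply: connected_component_max => //.
have QO : Q `<=` O by move=> y /Qx1 ->.
have [E [Ex EC clE clCE] EO] := FIgen O oO QO.
by exists E.
Qed.

End Topo.

Section Grp.
Context {G : topologicalType} (mul : G -> G -> G) (inv : G -> G) (e : G).
Context (tdlc : is_tdlc_group mul inv e).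

Let tg : is_topological_group mul inv e. Proof. by case: tdlc. Qed.
Lemma gA x y z : mul x (mul y z) = mul (mul x y) z.
Proof. by case: tg => h _ _ _ _; apply: h. Qed.
Lemma g1l x : mul e x = x. Proof. by case: tg => _ h _ _ _; case: (h x). Qed.
Lemma g1r x : mul x e = x. Proof. by case: tg => _ h _ _ _; case: (h x). Qed.
Lemma gVl x : mul (inv x) x = e. Proof. by case: tg => _ _ h _ _; case: (h x). Qed.
Lemma gVr x : mul x (inv x) = e. Proof. by case: tg => _ _ h _ _; case: (h x). Qed.
Lemma gKl x y : mul (inv x) (mul x y) = y.
Proof. by rewrite gA gVl g1l. Qed.
Lemma gKVl x y : mul x (mul (inv x) y) = y.
Proof. by rewrite gA gVr g1l. Qed.
Lemma ginv_uniq x y : mul x y = e -> inv x = y.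
Proof. by move=> h; rewrite -[inv x]g1r -h gA gVl g1l. Qed.
Lemma ginvM x y : inv (mul x y) = mul (inv y) (inv x).
Proof. by apply: ginv_uniq; rewrite gA -[mul (mul x y) (inv y)]gA gVr g1r gVr. Qed.
Lemma ginvK x : inv (inv x) = x.
Proof. by apply: ginv_uniq; rewrite gVl. Qed.
Lemma ginv1 : inv e = e.
Proof. by apply: ginv_uniq; rewrite g1l. Qed.
Lemma ghT : hausdorff_space G. Proof. by case: tdlc. Qed.
Lemma gcmul : continuous (fun p : G * G => mul p.1 p.2). Proof. by case: tg. Qed.
Lemma gcinv : continuous inv. Proof. by case: tg. Qed.

Lemma gcmull a : continuous (mul a).
Proof.
move=> x.
have h1 : {for x, continuous (fun z : G => (a, z))}.
  by apply: cvg_pair; [exact: cvg_cst | exact: cvg_id].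
exact: (continuous_comp h1 (@gcmul (a, x))).
Qed.

Lemma gcmulr a : continuous (mul^~ a).
Proof.
move=> x.
have h1 : {for x, continuous (fun z : G => (z, a))}.
  by apply: cvg_pair; [exact: cvg_id | exact: cvg_cst].
exact: (continuous_comp h1 (@gcmul (x, a))).
Qed.

Lemma nbhs_transl g (P : set G) : nbhs e P -> \forall z \near g, P (mul (inv g) z).
Proof.
move=> nP; have h := @gcmull (inv g) g; rewrite /continuous_at gVl in h.
exact: h.
Qed.

Lemma vD (N : set G) : nbhs e N ->
  exists K, compact_open_subgroup mul inv e K /\ K `<=` N.
Proof.
move=> nN.
have [_ _ lc td] := tdlc.
have [C cC nC] := lc e.
have : nbhs e (C `&` N) by exact: filterI.
rewrite nbhsE; case=> O [oO Oe] OCN.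
have [W [We WC clW clCW WO]] := qc ghT td cC (nbhs_singleton nC) oO Oe.
have oW : open W.
  have -> : W = O `&` ~` (C `\` W).
    apply/seteqP; split => y.
      by move=> Wy; split; [exact: WO | by case].
    move=> [Oy nCW]; apply: contrapT => nWy; apply: nCW; split => //.
    by have [] := OCN y Oy.
  by apply: openI => //; exact: closed_openC.
have cW : compact W := subclosed_compact clW cC WC.
pose K := [set g | (forall w, W w -> W (mul w g)) /\ (forall w, W w -> W (mul w (inv g)))].
have n1 : \forall v \near e, forall w, W w -> W (mul w v).
  apply: ((compact_near_coveringP W).1 cW G (nbhs e) (fun v w => W (mul w v))).
  move=> x Wx; have h := @gcmul (x, e); simpl in h.
  apply: h; apply: open_nbhs_nbhs; split => //; by rewrite g1r.
have n2 : \forall v \near e, forall w, W w -> W (mul w (inv v)).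
  have h := @gcinv e; rewrite /continuous_at ginv1 in h.
  exact: h n1.
have nK : nbhs e K by apply: filterS (filterI n1 n2) => v [].
have KW : K `<=` W by move=> g [h _]; rewrite -(g1l g); apply: h.
have Ke : K e by split => w Ww; rewrite ?ginv1 g1r.
have KM : forall x y, K x -> K y -> K (mul x y).
  move=> x y [x1 x2] [y1 y2]; split => w Ww.
    by rewrite gA; apply: y1; apply: x1.
  by rewrite ginvM gA; apply: x2; apply: y2.
have KV : forall x, K x -> K (inv x).
  by move=> x [x1 x2]; split => //; rewrite ginvK.
have oK : open K.
  rewrite openE => g Kg; rewrite /interior.
  apply: filterS (nbhs_transl g nK) => z Kz.
  by rewrite -(gKVl g z); apply: KM.
have clK : closed K.
  move=> y cly.
  have [z [Kz Kyz]] := cly _ (nbhs_transl y nK).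
  have := KM _ _ Kz (KV _ Kyz).
  by rewrite ginvM ginvK gA gVr g1l.
exists K; split; last by move=> g /KW /WO /OCN [].
rewrite /compact_open_subgroup /is_subgroup; split => //.
exact: subclosed_compact clK cW KW.
Qed.

End Grp.

Lemma bigsetU_mem {T} (I : eqType) (s : seq I) (F : I -> set T) x :
  (exists2 i, i \in s & F i x) <-> (\big[setU/set0]_(i <- s) F i) x.
Proof.
elim: s => [|a s IH]; first by rewrite big_nil; split => //; case.
rewrite big_cons; split.
  move=> [k]; rewrite inE => /orP[/eqP ->|iS Fi]; first by left.
  by right; apply/IH; exists k.
case=> [Fa|/IH [i iS Fi]]; first by exists a => //; rewrite inE eqxx.
by exists i => //; rewrite inE iS orbT.
Qed.

Section Dir1.
Context {R : realType} {G : topologicalType} (mul : G -> G -> G) (inv : G -> G) (e : G).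
Context (tdlc : is_tdlc_group mul inv e).

Lemma coset_memE x (H : set G) y h0 : is_subgroup mul inv e H -> H h0 ->
  (exists2 h, H h & mul y h0 = mul x h) <-> (exists2 h, H h & y = mul x h).
Proof.
move=> [He HM HV] Hh0; split=> -[h Hh E].
  exists (mul h (inv h0)); first by apply: HM => //; apply: HV.
  by rewrite (gA tdlc) -E -(gA tdlc) (gVr tdlc) (g1r tdlc).
by exists (mul h h0); [apply: HM | rewrite E (gA tdlc)].
Qed.

Lemma coset_ind_mulr x (H : set G) y h0 : is_subgroup mul inv e H -> H h0 ->
  coset_indicator R mul x H (mul y h0) = coset_indicator R mul x H y.
Proof.
by move=> sH Hh0; rewrite /coset_indicator (propext (coset_memE x y sH Hh0)).
Qed.

Lemma coset_ind_eq1 x (H : set G) y :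
  coset_indicator R mul x H y = if `[< exists2 h, H h & y = mul x h >] then 1 else 0.
Proof. by []. Qed.

Lemma cos_open (H : set G) : compact_open_subgroup mul inv e H -> nbhs e H.
Proof. by case=> [[He _ _] oH _]; apply: open_nbhs_nbhs. Qed.

Lemma lincomb_Cc n (c : 'I_n -> R[i]) (xs : 'I_n -> G) (Hs : 'I_n -> set G) :
  (forall i, compact_open_subgroup mul inv e (Hs i)) ->
  let F := (fun y => \sum_(i < n) c i * coset_indicator R mul (xs i) (Hs i) y) in
  Cc F /\ (forall y h, (forall i, Hs i h) -> F (mul y h) = F y).
Proof.
move=> HsC F.
have inv_mul : forall y h, (forall i, Hs i h) -> F (mul y h) = F y.
  move=> y h Hh; rewrite /F; apply: eq_bigr => i _.
  by rewrite coset_ind_mulr //; case: (HsC i).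
split => //; split.
  move=> y; apply: near_cst_continuous.
  have nN : \forall z \near y, forall i, Hs i (mul (inv y) z).
    apply: filter_forall => i; apply: (nbhs_transl tdlc); exact: cos_open.
  apply: filterS nN => z Hz /=.
  by rewrite -{1}(gKVl tdlc y z) inv_mul.
pose S := \big[setU/set0]_(i <- enum 'I_n) (mul (xs i) @` Hs i).
have cS : compact S.
  apply: bigsetU_compact => i _; apply: continuous_compact.
    exact/continuous_subspaceT/(gcmull tdlc).
  by case: (HsC i).
have clS : closed S := compact_closed (ghT tdlc) cS.
have sub : [set x | F x != 0] `<=` S.
  move=> x /= Fx; apply: contrapT => nSx; move/eqP: Fx; apply.
  rewrite /F big1 // => i _.
  rewrite coset_ind_eq1; case: asboolP; last by rewrite mulr0.
  move=> [h Hh xE]; exfalso; apply: nSx.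
  by apply/bigsetU_mem; exists i; [rewrite mem_enum | exists h].
have csupp : compact (fsupport F).
  apply: (subclosed_compact _ cS); first exact: closed_closure.
  by rewrite /fsupport; rewrite closure_id in clS; rewrite clS; apply: closureS.
by [].
Qed.

Lemma dir1 : @Cc_infty R G mul inv e `<=` @PG R G mul inv e.
Proof.
move=> f [n [c [xs [Hs [HsC ->]]]]].
have [CcF invF] := lincomb_Cc c xs HsC.
have [H [coH HN]] := vD tdlc (N := [set z | forall i, Hs i z]) 
   (filter_forall _ (fun i => cos_open (HsC i))).
split => //; exists H; split => //.
exists 1%N, (fun _ => (fun y => \sum_(i < n) c i * coset_indicator R mul (xs i) (Hs i) y)),
  (fun _ _ => 1); split; first by [].
split.
  by move=> _; apply: continuous_subspaceT => x; exact: cvg_cst.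
move=> x h Hh; rewrite big_ord1 mulr1.
exact: invF (fun i => HN h Hh i).
Qed.

End Dir1.

Section Dec.
Context {R : realType} {G : topologicalType} (mul : G -> G -> G) (inv : G -> G) (e : G).
Context (tdlc : is_tdlc_group mul inv e).

Lemma ci_cos x (K : set G) y : is_subgroup mul inv e K ->
  coset_indicator R mul x K y = if `[< K (mul (inv x) y) >] then 1 else 0.
Proof.
move=> [Ke KM KV]; rewrite /coset_indicator; congr (if _ then _ else _).
apply/asboolP/asboolP.
  by move=> [h Kh ->]; rewrite (gKl tdlc).
by move=> Kxy; exists (mul (inv x) y) => //; rewrite (gKVl tdlc).
Qed.

Lemma invariant_Cc_infty (f : G -> R[i]) (K : set G) :
  compact_open_subgroup mul inv e K -> Cc f ->
  (forall x k, K k -> f (mul x k) = f x) -> Cc_infty mul inv e f.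
Proof.
move=> coK [_ csupp] finv.
have sK : is_subgroup mul inv e K by case: coK.
have [[Ke KM KV] oK cK] := coK.
pose cos x := [set z | K (mul (inv x) z)].
have cos_trans : forall a b c, cos a b -> cos b c -> cos a c.
  move=> a b c ab bc; have := KM _ _ ab bc.
  by rewrite /cos /= -(gA tdlc) (gKVl tdlc).
have cos_sym : forall a b, cos a b -> cos b a.
  move=> a b ab; have := KV _ ab.
  by rewrite /cos /= (ginvM tdlc) (ginvK tdlc).
have cos_refl : forall a, cos a a by move=> a; rewrite /cos /= (gVl tdlc).
have ocos : forall x, open (cos x).
  move=> x; rewrite openE => z cz; rewrite /interior.
  have h := @gcmull _ _ _ _ tdlc (inv x) z.
  have nK : nbhs (mul (inv x) z) K by apply: open_nbhs_nbhs; split.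
  exact: h _ nK.
pose U (s : seq G) := [set z | exists2 x, x \in s & cos x z].
have oU : forall s, open (U s).
  move=> s0; have -> : U s0 = \bigcup_(x in [set x | x \in s0]) cos x.
    by apply/seteqP; split => z [x xs cz]; exists x.
  by apply: bigcup_open => x _; exact: ocos.
have [E [s ->] Es] : exists2 E, (fun E => exists s, E = fsupport f `\` U s) E & E `<=` set0.
  apply: (FI csupp open0); first by exists (fsupport f `\` U [::]); exists [::].
  - move=> _ _ [s1 ->] [s2 ->]; exists (fsupport f `\` U (s1 ++ s2)); first by exists (s1 ++ s2).
    move=> z [Sz nU]; split; split => // -[x xs cz]; apply: nU; exists x => //;
      by rewrite mem_cat xs ?orbT.
  - move=> _ [s0 ->]; split; last by move=> z [].
    by apply: closedI; [exact: closed_closure | exact: open_closedC].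
  - move=> y Hy; have [Sy _] := Hy (fsupport f `\` U [::]) (ex_intro _ [::] erefl).
    have [_ nU] := Hy (fsupport f `\` U [:: y]) (ex_intro _ [:: y] erefl).
    by apply: nU; exists y; rewrite ?inE.
have DS : forall y, fsupport f y -> exists2 x, x \in s & cos x y.
  by move=> y Sy; apply: contrapT => nU; apply: (Es y).
pose N := size s.
pose xs (j : 'I_N) := nth e s j.
pose c (j : 'I_N) : R[i] :=
  if `[< exists l : 'I_N, (l < j)%N /\ cos (xs l) (xs j) >] then 0 else f (xs j).
exists N, c, xs, (fun _ => K); split => //.
apply/funext => y.
under eq_bigr => j _ do rewrite ci_cos //.
case: (pselect (exists j : 'I_N, cos (xs j) y)) => [exj|nexj]; last first.
  rewrite big1; last first.
    move=> j _; case: asboolP => [cj|_]; last by rewrite mulr0.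
    by exfalso; apply: nexj; exists j.
  apply: contrapT => /eqP fy.
  have Sy : fsupport f y by apply: subset_closure.
  have [x Dx cxy] := DS y Sy.
  have ix : (index x s < N)%N by rewrite index_mem.
  apply: nexj; exists (Ordinal ix) => //.
  by rewrite /xs /= nth_index.
have exP : exists m, (m < N)%N && `[< cos (nth e s m) y >].
  by case: exj => j cj; exists j; rewrite ltn_ord; apply/asboolP.
case: (ex_minnP exP) => m /andP[mN /asboolP cm] mmin.
pose j0 := Ordinal mN.
rewrite (bigD1 j0) //= big1; last first.
  move=> j nj; case: asboolP => [cj|_]; last by rewrite mulr0.
  have m_le : (m <= j)%N by apply: mmin; rewrite ltn_ord; apply/asboolP.
  have mj : (m < j)%N.
    rewrite ltn_neqAle m_le andbT; apply: contra nj => /eqP mj.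
    by apply/eqP/val_inj => /=; rewrite -mj.
  rewrite /c; case: asboolP => [_|nl]; first by rewrite mul0r.
  exfalso; apply: nl; exists j0; split => //.
  by apply: (cos_trans (xs j0) y (xs j)) => //; apply: cos_sym.
rewrite addr0 /c; case: asboolP => [[l [lj cl]]|_].
  exfalso; have h : (l < N)%N && `[< cos (nth e s l) y >].
    by rewrite ltn_ord; apply/asboolP; apply: (cos_trans _ (xs j0)).
  by have := mmin l h; rewrite leqNgt lj.
case: asboolP => // _; rewrite mulr1.
by rewrite -{1}(gKVl tdlc (xs j0) y) finv.
Qed.

End Dec.

Section LinAlg.
Context {R : realType} {G : topologicalType} (e : G) (H : set G) (n : nat)
  (phis : 'I_n -> G -> R[i]).

Definition Mat (P : seq G) : 'M[R[i]]_(n, size P) :=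
  \matrix_(i, j) phis i (nth e P j).
Definition comb (a : 'rV[R[i]]_n) h := \sum_(i < n) a 0 i * phis i h.
Definition Good (P : seq G) :=
  forall a : 'rV[R[i]]_n, a *m Mat P = 0 -> forall h, H h -> comb a h = 0.

Lemma mulMat P (a : 'rV[R[i]]_n) j : (a *m Mat P) 0 j = comb a (nth e P j).
Proof. by rewrite !mxE; apply: eq_bigr => i _; rewrite mxE. Qed.

Lemma good_step P : ~ Good P -> (forall p, p \in P -> H p) ->
  exists P', (forall p, p \in P' -> H p) /\
    (\rank (kermx (Mat P')) < \rank (kermx (Mat P)))%N.
Proof.
move=> gP HP.
have [a [aM [h [Hh ah]]]] : exists a, a *m Mat P = 0 /\ exists h, H h /\ comb a h != 0.
  apply: contrapT => nex; apply: gP => a aM h Hh; apply: contrapT => nz.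
  by apply: nex; exists a; split => //; exists h; split => //; apply/eqP.
exists (h :: P); split.
  by move=> p; rewrite inE => /orP[/eqP ->|/HP].
have sub : (kermx (Mat (h :: P)) <= kermx (Mat P))%MS.
  apply/sub_kermxP/matrixP => k j.
  have := congr1 (fun M : 'M[R[i]]_(n, (size P).+1) => M k (lift ord0 j)) (mulmx_ker (Mat (h :: P))).
  rewrite !mxE /= => E; rewrite -[X in _ = X]E; apply: eq_bigr => i _; rewrite !mxE /=.
  by congr (_ * phis i _); rewrite /bump /=.
suff : (kermx (Mat (h :: P)) < kermx (Mat P))%MS by rewrite ltmxErank => /andP[].
rewrite ltmxE sub /=; apply/negP => sub2.
have aK : (a <= kermx (Mat P))%MS by apply/sub_kermxP.
have := submx_trans aK sub2 => /sub_kermxP /matrixP /(_ 0%R ord0).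
rewrite (@mulMat (h :: P) a ord0) /= mxE => ah0.
by rewrite ah0 eqxx in ah.
Qed.

Lemma good_exists : exists P, (forall p, p \in P -> H p) /\ Good P.
Proof.
suff : forall r P, (forall p, p \in P -> H p) ->
    (\rank (kermx (Mat P)) <= r)%N -> exists P, (forall p, p \in P -> H p) /\ Good P.
  by move=> /(_ n [::]); apply => //; exact: rank_leq_col.
elim=> [|r IH] P HP rk; (case: (pselect (Good P)) => gP; first by exists P);
  have [P' [HP' rk']] := good_step gP HP.
  by move: rk; rewrite leqn0 => /eqP rk; rewrite rk in rk'.
by apply: (IH P') => //; rewrite -ltnS (leq_trans rk').
Qed.

End LinAlg.

Section N1.
Context {R : realType}.
Definition cre (z : R[i]) : R := let: Complex a b := z in a.
Definition cim (z : R[i]) : R := let: Complex a b := z in b.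
Lemma creD (x y : R[i]) : cre (x + y) = cre x + cre y. Proof. by case: x => a b; case: y => c d. Qed.
Lemma cimD (x y : R[i]) : cim (x + y) = cim x + cim y. Proof. by case: x => a b; case: y => c d. Qed.
Lemma creM (x y : R[i]) : cre (x * y) = cre x * cre y - cim x * cim y. Proof. by case: x => a b; case: y => c d. Qed.
Lemma cimM (x y : R[i]) : cim (x * y) = cre x * cim y + cim x * cre y. Proof. by case: x => a b; case: y => c d. Qed.
Lemma creN (x : R[i]) : cre (- x) = - cre x. Proof. by case: x. Qed.
Lemma cimN (x : R[i]) : cim (- x) = - cim x. Proof. by case: x. Qed.
Lemma cre0 : cre (0 : R[i]) = 0. Proof. by []. Qed.
Lemma cim0 : cim (0 : R[i]) = 0. Proof. by []. Qed.
Lemma c_eq0 (x : R[i]) : cre x = 0 -> cim x = 0 -> x = 0. Proof. by case: x => a b /= -> ->. Qed.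

Definition N1 (z : R[i]) : R := `|cre z| + `|cim z|.
Lemma N1_ge0 z : 0 <= N1 z. Proof. by rewrite /N1 addr_ge0. Qed.
Lemma N10 : N1 0 = 0. Proof. by rewrite /N1 cre0 cim0 normr0 addr0. Qed.
Lemma N1D x y : N1 (x + y) <= N1 x + N1 y.
Proof.
rewrite /N1 creD cimD.
have := ler_normD (cre x) (cre y); have := ler_normD (cim x) (cim y); lra.
Qed.
Lemma N1N x : N1 (- x) = N1 x. Proof. by rewrite /N1 creN cimN !normrN. Qed.
Lemma N1B x y : N1 (x - y) <= N1 x + N1 y.
Proof. by rewrite -(N1N y); apply: N1D. Qed.
Lemma N1M x y : N1 (x * y) <= N1 x * N1 y.
Proof.
rewrite /N1 creM cimM.
have h1 := ler_normB (cre x * cre y) (cim x * cim y).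
have h2 := ler_normD (cre x * cim y) (cim x * cre y).
rewrite !normrM in h1 h2.
have := normr_ge0 (cre x); have := normr_ge0 (cim x);
have := normr_ge0 (cre y); have := normr_ge0 (cim y); nra.
Qed.
Lemma N1_double x : N1 (x + x) = 2 * N1 x.
Proof.
rewrite /N1 creD cimD -!mulr2n !normrMn; lra.
Qed.
Lemma N1_eq0 x : N1 x = 0 -> x = 0.
Proof.
move=> /eqP; rewrite /N1 paddr_eq0 ?normr_ge0 // !normr_eq0 => /andP[/eqP a /eqP b].
exact: c_eq0.
Qed.
Lemma N1_sum (I : finType) (F : I -> R[i]) : N1 (\sum_i F i) <= \sum_i N1 (F i).
Proof.
apply: (big_ind2 (fun z r => N1 z <= r)); first by rewrite N10.
  by move=> x1 x2 y1 y2 h1 h2; apply: le_trans (N1D _ _) _; exact: lerD.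
by [].
Qed.
Lemma N1_sumM (I : finType) (a b : I -> R[i]) :
  N1 (\sum_i a i * b i) <= \sum_i N1 (a i) * N1 (b i).
Proof. apply: le_trans (N1_sum _) _; apply: ler_sum => i _; exact: N1M. Qed.

Lemma sum_ge_term (I : finType) (F : I -> R) j : (forall i, 0 <= F i) -> F j <= \sum_i F i.
Proof. by move=> h; rewrite (bigD1 j) //= lerDl sumr_ge0. Qed.

Lemma geo_zero (d X : R) : 0 <= d -> (forall m : nat, d <= (2/3) ^+ m * X) -> d = 0.
Proof.
move=> d0 hm.
have bern : forall m : nat, 1 + m%:R / 2 <= (3/2 : R) ^+ m.
  elim=> [|m IH]; first by rewrite expr0 mul0r addr0.
  rewrite exprS -natr1.
  have : 1 <= (3/2 : R) ^+ m by apply: le_trans IH; rewrite lerDl divr_ge0.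
  have : 0 <= m%:R :> R by [].
  lra.
have h2 : forall m : nat, d * (1 + m%:R / 2) <= X.
  move=> m.
  have e1 : (2/3 : R) ^+ m * (3/2) ^+ m = 1.
    have e0 : (2/3 * (3/2) : R) = 1 by lra.
    by rewrite -exprMn e0 expr1n.
  have p0 : 0 <= (3/2 : R) ^+ m by rewrite exprn_ge0.
  apply: le_trans (ler_wpM2l d0 (bern m)) _.
  apply: le_trans (ler_wpM2r p0 (hm m)) _.
  by rewrite mulrAC e1 mul1r.
have X0 : d <= X by have := h2 0%N; rewrite mul0r addr0 mulr1.
apply/eqP; apply: contraT => dn0.
have dp : 0 < d by rewrite lt_def dn0 d0.
have q0 : 0 <= 2 * X / d by rewrite divr_ge0 // mulr_ge0 // (le_trans d0 X0).
have := archi_boundP q0; set b := Num.Def.archi_bound _ => hb.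
have hb' : 2 * X < b%:R * d by rewrite -ltr_pdivrMr.
have := h2 b; nra.
Qed.
End N1.

Section Dir2.
Context {R : realType} {G : topologicalType} (mul : G -> G -> G) (inv : G -> G) (e : G).
Context (tdlc : is_tdlc_group mul inv e).
Context (f : G -> R[i]) (H : set G) (coH : compact_open_subgroup mul inv e H).
Context (n : nat) (fs phis : 'I_n -> G -> R[i]).
Context (phic : forall i, ccontinuous_within H (phis i)).
Context (hdec : forall x h, H h -> f (mul x h) = \sum_(i < n) fs i x * phis i h).

Inductive inV : (G -> R[i]) -> Prop :=
 | inV_F x : inV (fun h => f (mul x h))
 | inV_sub w1 w2 : inV w1 -> inV w2 -> inV (fun h => w1 h - w2 h).

Definition Dk (k : G) (w : G -> R[i]) := fun h => w (mul k h) - w h.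

Lemma inV_D k w : inV w -> inV (Dk k w).
Proof.
elim=> [x|w1 w2 _ IH1 _ IH2].
  have -> : Dk k (fun h => f (mul x h)) =
      (fun h => (fun h => f (mul (mul x k) h)) h - (fun h => f (mul x h)) h).
    by apply/funext => h; rewrite /Dk (gA tdlc).
  by apply: inV_sub; apply: inV_F.
have -> : Dk k (fun h => w1 h - w2 h) = (fun h => Dk k w1 h - Dk k w2 h).
  by apply/funext => h; rewrite /Dk; ring.
by apply: inV_sub.
Qed.

Lemma inV_W w : inV w -> exists a : 'rV[R[i]]_n, forall h, H h -> w h = comb phis a h.
Proof.
elim=> [x|w1 w2 _ [a1 h1] _ [a2 h2]].
  exists (\row_i fs i x) => h Hh; rewrite hdec // /comb; apply: eq_bigr => i _.
  by rewrite mxE.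
exists (a1 - a2) => h Hh; rewrite h1 // h2 // /comb -sumrB; apply: eq_bigr => i _.
by rewrite !mxE mulrBl.
Qed.

Context (P : seq G) (HP : forall p, p \in P -> H p) (gP : Good e H phis P).

Let M := Mat e phis P.
Let Pinv := pinvmx M.
Let pt (j : 'I_(size P)) := nth e P j.
Definition vP (w : G -> R[i]) : 'rV[R[i]]_(size P) := \row_j w (pt j).
Definition nrm (w : G -> R[i]) : R := \sum_j N1 (w (pt j)).
Definition cf w := vP w *m Pinv.
Definition Bc : R := \sum_j \sum_i N1 (Pinv j i).
Definition etaB : R := (2 * ((size P)%:R * n%:R * Bc + 1))^-1.

Lemma Hpt j : H (pt j). Proof. exact: HP (mem_nth e (ltn_ord j)). Qed.

Lemma nrm_ge0 w : 0 <= nrm w. Proof. by apply: sumr_ge0 => j _; exact: N1_ge0. Qed.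
Lemma Bc_ge0 : 0 <= Bc.
Proof. by apply: sumr_ge0 => j _; apply: sumr_ge0 => i _; exact: N1_ge0. Qed.

Lemma rep w : inV w -> forall h, H h -> w h = comb phis (cf w) h.
Proof.
move=> Vw; have [a ha] := inV_W Vw.
have vPa : vP w = a *m M.
  apply/matrixP => i j; rewrite ord1 mxE (@mulMat _ _ e _ _ P a j) ha //.
  exact: Hpt.
have cM : cf w *m M = vP w by rewrite /cf vPa mulmxKpV // submxMl.
have d0 : (cf w - a) *m M = 0 by rewrite mulmxBl cM vPa subrr.
move=> h Hh; have E := gP d0 Hh.
have E' : comb phis (cf w - a) h = comb phis (cf w) h - comb phis a h.
  by rewrite /comb -sumrB; apply: eq_bigr => i _; rewrite !mxE mulrBl.
rewrite ha //; apply/eqP; rewrite eq_sym -subr_eq0 -E' E //.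
Qed.

Lemma cf_bound w i : N1 (cf w 0 i) <= Bc * nrm w.
Proof.
rewrite /cf mxE.
apply: le_trans (N1_sumM _ _) _.
rewrite /nrm mulr_sumr; apply: ler_sum => j _; rewrite mxE mulrC.
apply: ler_wpM2r; first exact: N1_ge0.
rewrite /Bc; apply: (le_trans _ (@sum_ge_term _ _ (fun j => \sum_i N1 (Pinv j i)) j _)).
  by apply: (@sum_ge_term _ _ (fun i => N1 (Pinv j i)) i) => i'; exact: N1_ge0.
by move=> j'; apply: sumr_ge0 => i' _; exact: N1_ge0.
Qed.

Lemma Dbound k w : H k ->
  (forall j i, N1 (phis i (mul k (pt j)) - phis i (pt j)) <= etaB) ->
  inV w -> nrm (Dk k w) <= nrm w / 2.
Proof.
move=> Hk hk Vw.
have [[_ HM _] _ _] := coH.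
have eta0 : 0 <= etaB.
  by rewrite /etaB invr_ge0 mulr_ge0 // addr_ge0 // mulr_ge0 // Bc_ge0.
have step : forall j, N1 (Dk k w (pt j)) <= n%:R * (Bc * nrm w * etaB).
  move=> j; rewrite /Dk (rep Vw (HM _ _ Hk (Hpt j))) (rep Vw (Hpt j)) /comb -sumrB.
  under eq_bigr => i _ do rewrite -mulrBr.
  apply: le_trans (N1_sumM _ _) _.
  apply: (@le_trans _ _ (\sum_(i < n) (Bc * nrm w) * etaB)).
    apply: ler_sum => i _; apply: ler_pM => //; [exact: N1_ge0 | exact: N1_ge0 | exact: cf_bound].
  by rewrite sumr_const card_ord mulr_natl.
apply: (@le_trans _ _ (\sum_(j < size P) n%:R * (Bc * nrm w * etaB))).
  by apply: ler_sum => j _; exact: step.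
rewrite sumr_const card_ord.
set A := (size P)%:R * n%:R * Bc.
have A0 : 0 <= A by rewrite /A mulr_ge0 // Bc_ge0.
have Aeta : A * etaB <= 1/2.
  rewrite /etaB -/A -[A * _]/(A / _) ler_pdivrMr; last by rewrite mulr_gt0 // ltr_wpDl.
  lra.
have -> : (n%:R * (Bc * nrm w * etaB)) *+ size P = (A * etaB) * nrm w.
  by rewrite /A -mulr_natl; ring.
have := nrm_ge0 w; have := ler_wpM2r (nrm_ge0 w) Aeta; lra.
Qed.

Lemma nss (Ks : set G) : (forall k, Ks k -> H k) -> (forall k, Ks k -> Ks (mul k k)) ->
  (forall k, Ks k -> forall j i, N1 (phis i (mul k (pt j)) - phis i (pt j)) <= etaB) ->
  forall k w, Ks k -> inV w -> nrm (Dk k w) = 0.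
Proof.
move=> KH Ksq Kb.
have ind : forall m0 k w, Ks k -> inV w -> nrm (Dk k w) <= (2/3) ^+ m0 * nrm w.
  elim=> [|m0 IH] k w Kk Vw.
    rewrite expr0 mul1r; apply: le_trans (Dbound (KH _ Kk) (Kb _ Kk) Vw) _.
    have := nrm_ge0 w; lra.
  have e1 : forall h, Dk k w h + Dk k w h = Dk (mul k k) w h - Dk k (Dk k w) h.
    by move=> h; rewrite /Dk -(gA tdlc); ring.
  have h2 : 2 * nrm (Dk k w) <= nrm (Dk (mul k k) w) + nrm (Dk k (Dk k w)).
    rewrite /nrm mulr_sumr -big_split; apply: ler_sum => j _.
    by rewrite -N1_double e1; exact: N1B.
  have a1 := IH _ _ (Ksq _ Kk) Vw.
  have a2 := Dbound (KH _ Kk) (Kb _ Kk) (inV_D k Vw).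
  rewrite exprS -mulrA; move: a1; set t := (2/3) ^+ m0 * nrm w => a1.
  lra.
move=> k w Kk Vw; apply: (@geo_zero _ _ (nrm w)); first exact: nrm_ge0.
by move=> m0; exact: ind.
Qed.

Lemma nss_inv (Ks : set G) : (forall k, Ks k -> H k) -> (forall k, Ks k -> Ks (mul k k)) ->
  (forall k, Ks k -> forall j i, N1 (phis i (mul k (pt j)) - phis i (pt j)) <= etaB) ->
  forall x k, Ks k -> f (mul x k) = f x.
Proof.
move=> KH Ksq Kb x k Kk.
have [[He _ _] _ _] := coH.
pose w := fun h => f (mul x h).
have Vw : inV w by exact: inV_F.
have z := nss KH Ksq Kb Kk Vw.
have VD := inV_D k Vw.
have zj : forall j, Dk k w (pt j) = 0.
  move=> j; apply: N1_eq0; move/eqP: z; rewrite psumr_eq0; last by move=> j' _; exact: N1_ge0.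
  by move=> /allP /(_ j (mem_index_enum _)) /eqP.
have cf0 : cf (Dk k w) = 0.
  rewrite /cf; have -> : vP (Dk k w) = 0 by apply/matrixP => a b; rewrite !mxE zj.
  by rewrite mul0mx.
have := rep VD He; rewrite cf0 /comb big1 => [|i _]; last by rewrite mxE mul0r.
by rewrite /Dk /w !(g1r tdlc) => /eqP; rewrite subr_eq0 => /eqP.
Qed.

End Dir2.

Section Fin.
Context {R : realType} {G : topologicalType} (mul : G -> G -> G) (inv : G -> G) (e : G).
Context (tdlc : is_tdlc_group mul inv e).

Lemma CtoR2E (z : R[i]) : C_to_R2 z = (cre z, cim z). Proof. by case: z. Qed.

Lemma phi_near (H : set G) (phi : G -> R[i]) p (r : R) :
  compact_open_subgroup mul inv e H -> ccontinuous_within H phi -> 0 < r -> H p ->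
  \forall k \near e, N1 (phi (mul k p) - phi p) <= r.
Proof.
move=> [[He HM _] oH _] cphi r0 Hp.
have c := cphi p.
have c' : (@C_to_R2 R \o phi) @ within H (nbhs p) --> (@C_to_R2 R \o phi) p.
  by rewrite nbhs_subspace_in //; exact: c.
have r2 : 0 < r / 2 by rewrite divr_gt0.
have nb : nbhs ((@C_to_R2 R \o phi) p)
    [set q : R * R | `|q.1 - cre (phi p)| < r / 2 /\ `|q.2 - cim (phi p)| < r / 2].
  apply: filterS (@nbhsx_ballx _ _ ((@C_to_R2 R \o phi) p) (r / 2) r2).
  rewrite /= CtoR2E => -[a b] [/= h1 h2].
  by move: h1 h2; rewrite /ball /= (distrC (cre _)) (distrC (cim _)).
have w := c' _ nb; move: w; rewrite /within /= => w.
have w' : \forall z \near p, H z -> N1 (phi z - phi p) <= r.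
  have w2 : \forall z \near p, H z -> `|cre (phi z) - cre (phi p)| < r / 2 /\
      `|cim (phi z) - cim (phi p)| < r / 2.
    have w3 : \forall z \near p, H z -> [set q : R * R | `|q.1 - cre (phi p)| < r / 2 /\
      `|q.2 - cim (phi p)| < r / 2] ((@C_to_R2 R \o phi) z) := w.
    by apply: filterS w3 => z hz Hz; have := hz Hz; rewrite /= CtoR2E.
  apply: filterS w2 => z hz Hz; have [h1 h2] := hz Hz.
  rewrite /N1 creD cimD creN cimN; lra.
have m := @gcmulr _ _ _ _ tdlc p e; rewrite /continuous_at (g1l tdlc) in m.
have m' := m _ w'.
have nH : nbhs e H by apply: open_nbhs_nbhs.
by apply: filterS2 nH m' => k Hk; apply; apply: HM.
Qed.
Lemma dir2 : @PG R G mul inv e `<=` @Cc_infty R G mul inv e.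
Proof.
move=> f [Ccf [H [coH [n [fs [phis [fsC [phic hdec]]]]]]]].
have [P [HP gP]] := good_exists e H phis.
have eta_pos : 0 < etaB e phis P.
  rewrite /etaB invr_gt0 mulr_gt0 // ltr_wpDl // mulr_ge0 //.
  by apply: sumr_ge0 => j _; apply: sumr_ge0 => i _; exact: N1_ge0.
pose N := [set k | H k /\ forall (j : 'I_(size P)) (i : 'I_n),
  N1 (phis i (mul k (nth e P j)) - phis i (nth e P j)) <= etaB e phis P].
have nN : nbhs e N.
  apply: filterI; first exact: cos_open coH.
  apply: filter_forall => j; apply: filter_forall => i.
  apply: (phi_near coH (phic i) eta_pos).
  exact: HP (mem_nth e (ltn_ord j)).
have [K [coK KN]] := vD tdlc nN.
have [[Ke KM KV] _ _] := coK.
have finv : forall x k, K k -> f (mul x k) = f x.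
  move=> x k Kk; apply: (nss_inv tdlc coH hdec HP gP (Ks := K)) => //.
  - by move=> k' /KN [].
  - by move=> k' Kk'; apply: KM.
  - by move=> k' /KN [].
have := @invariant_Cc_infty R G mul inv e tdlc f K coK Ccf finv. exact.
Qed.
End Fin.

Theorem theorem4p2 (R : realType) (G : topologicalType)
  (mul : G -> G -> G) (inv : G -> G) (e : G) :
  is_tdlc_group mul inv e ->
  @Cc_infty R G mul inv e = @PG R G mul inv e.
Proof.
move=> tdlc; apply/seteqP; split; [exact: dir1 | exact: dir2].
Qed.
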